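(* Let $\Gamma^\infty$ be the infinite-horizon finite-action trading game described below, $m\ge1$, and $\epsilon\ge0$. If an assessment $(h^*,\mathscr B)\in\mathcal A(m)$ is an $\epsilon$-Perfect Bayesian equilibrium of the truncated game $\Gamma(m)$, then $(h^*,\mathscr B)$ is an $(\epsilon+w^m)$-Perfect Bayesian equilibrium of $\Gamma^\infty$.
   Context: $\Gamma^\infty$: finite state space $\Omega$, traders $I=\{1,\dots,n\}$ with partitions $\Pi_i$, security $X$, full-support common prior $\mu$, continuous strictly proper scoring rule $s$, $\beta\in(0,1)$, marginal cost $c>0$, cost function $K\ge0$; a finite set $\mathcal Y\subseteq[\min X,\max X]$ of announcements containing $y_0$ and a finite set $\mathcal E$ of signals with finitely many realizations. At $t_0$ nature draws $\omega^*\sim\mu$, the market maker announces $y_0$; at $t_k$ ($k\ge1$) trader $((k-1)\bmod n)+1$ privately picks a signal and, for each realization, an announcement in $\mathcal Y$; the realized announcement $y_k$ is public. The null action repeats the previous announcement and buys no signal. Payoff at $t_k$: $\beta^k(s(y_k,X(\omega^* ))-s(y_{k-1},X(\omega^* ))-cK(\mathcal R))$; payoffs summed over one's moves. An assessment $(\sigma,\mathscr B)$ consists of a behavior strategy profile and beliefs (over the full uncertainty) at every information set; it is consistent if beliefs follow from $\mu,\sigma$ by Bayes' rule whenever possible. $V_i(\mathcal I,\sigma,\mathscr B)$ denotes trader $i$'s continuation payoff at information set $\mathcal I$ under $\sigma$ with beliefs from $\mathscr B$. A consistent assessment $(\sigma^*,\mathscr B)$ is an $\epsilon$-Perfect Bayesian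 equilibrium if there is no information set $\mathcal I$ with mover $i$ and strategy $\sigma_i$ with $V_i(\mathcal I,(\sigma_i,\sigma^*_{-i}),\mathscr B)>V_i(\mathcal I,\sigma^*,\mathscr B)+\epsilon$ (deviations ranging over the strategies of the game in question). Truncated game $\Gamma(m)$: same as $\Gamma^\infty$ except that at all times $t_k$ with $k>m$ the only available action is the null action. $\Sigma(m)$ denotes its strategy profiles. $\mathcal A(m)$ is the set of assessments $(h,\mathscr B)$ with $h\in\Sigma(m)$ whose beliefs do not update after $t_m$ (if $k>m$ and $\mathcal I_{k-1}$ immediately precedes $\mathcal I_k$ then $\mathscr B(\mathcal I_k)=\mathscr B(\mathcal I_{k-1})$). Let $w^m=\sup_{\mathcal I,\mathscr B}\sup_{i,\ \sigma=_{m-1}\tau}|V_i(\mathcal I,\sigma,\mathscr B)-V_i(\mathcal I,\tau,\mathscr B)|$, where $\sigma=_{m-1}\tau$ means the profiles coincide at all information sets up to time $t_{m-1}$ and the supremum ranges over all information sets and all belief systems of $\Gamma^\infty$. *)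

(* Defs.v *)
From HB Require Import structures.
From mathcomp Require Import all_boot all_order all_algebra.
From mathcomp Require Import all_classical all_reals all_analysis.
Import Order.TTheory GRing.Theory Num.Theory.
Import numFieldNormedType.Exports.
Local Open Scope ring_scope.

Record market (R : realType) := Market {
  state : finType;
  ntraders : nat;                           (* n; traders are 'I_n (0-based) *)
  part : 'I_ntraders -> {set {set state}};
  sec : state -> R;
  prior : state -> R;
  score : R -> R -> R;
  disc : R;
  mcost : R;
  signal : finType;
  sigpart : signal -> {set {set state}};    (* a signal = a partition of Omega;
                                               its realizations are its cells *)
  cost : signal -> R;
  ann : finType;
  annval : ann -> R;
  ann0 : ann
}.

Arguments state {R}. Arguments ntraders {R}. Arguments part {R}. Arguments sec {R}.
Arguments prior {R}. Arguments score {R}. Arguments disc {R}. Arguments mcost {R}.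
Arguments signal {R}. Arguments sigpart {R}. Arguments cost {R}. Arguments ann {R}.
Arguments annval {R}. Arguments ann0 {R}.

Set Implicit Arguments. Unset Strict Implicit. Unset Printing Implicit Defensive.

Definition strictly_proper R (M : market R) : Prop :=
  forall q : state M -> R, (forall w, 0 <= q w) -> \sum_w q w = 1 ->
  forall y : R, y != \sum_w q w * sec M w ->
    \sum_w q w * score M y (sec M w)
      < \sum_w q w * score M (\sum_w' q w' * sec M w') (sec M w).

Definition market_axioms R (M : market R) : Prop :=
  (0 < ntraders M)%N /\
  (forall i, finset.partition (part M i) [set: state M]) /\
  (forall w, 0 < prior M w) /\ (\sum_w prior M w = 1) /\
  continuous (fun p : R * R => score M p.1 p.2) /\
  strictly_proper M /\
  (0 < disc M < 1) /\ (0 < mcost M) /\ (forall e, 0 <= cost M e) /\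
  (forall e, finset.partition (sigpart M e) [set: state M]) /\
  injective (annval M) /\
  (forall y, exists w1 w2, sec M w1 <= annval M y <= sec M w2).

Section Game.
Variables (R : realType) (M : market R).
Local Notation St := (state M).
Local Notation n := (ntraders M).

(* an action: a signal (None = buy no signal) and, for each realization
   (a cell of the signal's partition; setT when no signal), an announcement *)
Definition action := (option (signal M) * {ffun {set St} -> ann M})%type.
Definition hist := seq action.   (* actions a_1 .. a_k, chronological *)

Definition act0 : action := (None, [ffun=> ann0 M]).

Definition realization (a : action) (w : St) : {set St} :=
  if a.1 is Some e then finset.pblock (sigpart M e) w else [set: St].

Definition announce (a : action) (w : St) : ann M := a.2 (realization a w).

Definition last_ann (w : St) (h : hist) : ann M :=
  last (ann0 M) [seq announce a w | a <- h].

Definition null_act (w : St) (h : hist) : action := (None, [ffun=> last_ann w h]).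

(* a node (w, h) with size h = k-1 is where the decision at time t_k is taken;
   the mover is trader ((k-1) mod n)+1, i.e. index (size h) mod n (0-based) *)
Definition mover_is (i : 'I_n) (h : hist) : bool := (size h %% n == i)%N.

(* what trader i knows at node (w, h): own partition cell, the public
   announcements, and own past actions together with their realizations *)
Definition view (i : 'I_n) (w : St) (h : hist) :=
  (finset.pblock (part M i) w, [seq announce a w | a <- h],
   mkseq (fun j => if (j %% n == i)%N
                   then Some (nth act0 h j, realization (nth act0 h j) w)
                   else None) (size h)).

Definition same_info (w : St) (h : hist) (w' : St) (h' : hist) : bool :=
  (size h == size h')%N &&
  [forall i : 'I_n, mover_is i h ==> (view i w h == view i w' h')].

(* behavior strategy profiles: probability of action a at node (w, h) *)
Definition profile := St -> hist -> action -> R.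

Definition is_profile (sg : profile) : Prop :=
  (forall w h a, 0 <= sg w h a) /\ (forall w h, \sum_a sg w h a = 1) /\
  (forall w h w' h', same_info w h w' h' -> forall a, sg w h a = sg w' h' a).

(* Gamma^infty : all actions available at every time *)
Definition Gamma_inf : profile -> Prop := is_profile.

(* Gamma(m): at times t_k with k > m only the null action is available *)
Definition Gamma (m : nat) : profile -> Prop := fun sg =>
  is_profile sg /\ (forall w h, (m <= size h)%N -> sg w h (null_act w h) = 1).

(* trader i deviates to (the i-part of) tau *)
Definition mix (i : 'I_n) (tau sg : profile) : profile :=
  fun w h => if mover_is i h then tau w h else sg w h.

(* payoff of the mover at time t_k, k = size h + 1 *)
Definition stage (w : St) (h : hist) (a : action) : R :=
  disc M ^+ (size h).+1 *
    (score M (annval M (announce a w)) (sec M w)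
     - score M (annval M (last_ann w h)) (sec M w)
     - mcost M * (if a.1 is Some e then cost M e else 0)).

Fixpoint vT (T : nat) (i : 'I_n) (sg : profile) (w : St) (h : hist) : R :=
  if T is T'.+1 then
    \sum_a sg w h a * ((if mover_is i h then stage w h a else 0)
                       + vT T' i sg w (rcons h a))
  else 0.

Definition cont (i : 'I_n) (sg : profile) (w : St) (h : hist) : R :=
  limn (fun T => vT T i sg w h).

(* belief systems: B w h w' h' = probability assigned to node (w',h')
   at the information set containing node (w,h) *)
Definition beliefs := St -> hist -> St -> hist -> R.

Definition is_beliefs (B : beliefs) : Prop :=
  forall w h,
    (forall w' h', 0 <= B w h w' h') /\
    (forall w' h', ~~ same_info w h w' h' -> B w h w' h' = 0) /\
    (\sum_w' \sum_(t : (size h).-tuple action) B w h w' t = 1) /\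
    (forall w2 h2, same_info w h w2 h2 -> forall w' h', B w h w' h' = B w2 h2 w' h').

(* V_i(I, sg, B), I the information set of node (w,h) *)
Definition V (i : 'I_n) (w : St) (h : hist) (sg : profile) (B : beliefs) : R :=
  \sum_w' \sum_(t : (size h).-tuple action) B w h w' t * cont i sg w' t.

Definition pnode (sg : profile) (w : St) (h : hist) : R :=
  prior M w * \prod_(j < size h) sg w (take j h) (nth act0 h j).

Definition pinfo (sg : profile) (w : St) (h : hist) : R :=
  \sum_w' \sum_(t : (size h).-tuple action) (same_info w h w' t)%:R * pnode sg w' t.

Definition consistent (sg : profile) (B : beliefs) : Prop :=
  forall w h, 0 < pinfo sg w h ->
  forall w' (t : (size h).-tuple action),
    B w h w' t = (same_info w h w' t)%:R * pnode sg w' t / pinfo sg w h.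

Definition eps_PBE (G : profile -> Prop) (eps : R) (sg : profile) (B : beliefs) : Prop :=
  G sg /\ is_beliefs B /\ consistent sg B /\
  forall (i : 'I_n) w h, mover_is i h ->
  forall tau, G tau -> V i w h (mix i tau sg) B <= V i w h sg B + eps.

Definition null_ext (w : St) (h : hist) (k : nat) : hist :=
  iter k (fun h' => rcons h' (null_act w h')) h.

(* the class A(m): profiles of Gamma(m) with beliefs that do not update after
   t_m (belief of each trader at an information set after t_m equals his belief
   at his preceding information set after t_m, transported along the null moves) *)
Definition in_A (m : nat) (sg : profile) (B : beliefs) : Prop :=
  Gamma m sg /\ is_beliefs B /\
  forall w h, (m <= size h)%N -> forall w' h', size h' = size h ->
    B w (null_ext w h n) w' (null_ext w' h' n) = B w h w' h'.

Definition agree_upto (k : nat) (sg tau : profile) : Prop :=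
  forall w h, ((size h).+1 <= k)%N -> forall a, sg w h a = tau w h a.

Definition wm (m : nat) : R :=
  sup [set d : R | exists (i : 'I_n) w h sg tau B,
         [/\ is_profile sg, is_profile tau, agree_upto m.-1 sg tau, is_beliefs B &
             d = `|V i w h sg B - V i w h tau B|]]%classic.

End Game.

(* Main.v *)
Require Import Defs.
From HB Require Import structures.
From mathcomp Require Import all_boot all_order all_algebra.
From mathcomp Require Import all_classical all_reals all_analysis.
Import Order.TTheory GRing.Theory Num.Theory.
Import numFieldNormedType.Exports.
Local Open Scope ring_scope.

Section Aux.
Variables (R : realType) (M : market R).

Definition Cb : R :=
  (\sum_y \sum_w `|score M (annval M y) (sec M w)|) *+ 2
  + `|mcost M| * \sum_e `|cost M e|.

Lemma term_le (y : ann M) (w : state M) :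
  `|score M (annval M y) (sec M w)| <= \sum_y \sum_w `|score M (annval M y) (sec M w)|.
Proof.
rewrite (bigD1 y) //= (bigD1 w) //= -addrA lerDl addr_ge0 //;
  by apply: sumr_ge0 => *; rewrite ?sumr_ge0.
Qed.

Lemma Cb_ge0 : 0 <= Cb.
Proof.
by rewrite /Cb addr_ge0 ?mulr_ge0 ?mulrn_wge0 ?sumr_ge0 // => *; rewrite ?sumr_ge0.
Qed.

Lemma stage_bound (w : state M) (h : hist M) (a : action M) :
  0 <= disc M -> `|stage w h a| <= disc M ^+ (size h).+1 * Cb.
Proof.
move=> b0; rewrite /stage normrM normrX ger0_norm // ler_wpM2l ?exprn_ge0 //.
rewrite /Cb mulr2n.
apply: le_trans (ler_normB _ _) _.
apply: lerD; first apply: le_trans (ler_normB _ _) _.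
  by apply: lerD; apply: term_le.
rewrite normrM ler_wpM2l //.
case: a.1 => [e|]; last by rewrite normr0 sumr_ge0.
by rewrite (bigD1 e) //= lerDl sumr_ge0.
Qed.

Lemma vT_bound (i : 'I_(ntraders M)) (sg : profile M) (w : state M) : is_profile sg ->
  0 < disc M < 1 ->
  forall T h, `|vT T i sg w h| <= Cb * disc M / (1 - disc M) * disc M ^+ size h.
Proof.
move=> [sg0 [sg1 _]] /andP[b0 b1] T; elim: T => [|T IH] h /=.
  rewrite normr0; apply: mulr_ge0; last by rewrite exprn_ge0 // ltW.
  apply: divr_ge0; last by rewrite subr_ge0 ltW.
  by apply: mulr_ge0; [exact: Cb_ge0|exact: ltW].
set D := Cb * disc M / (1 - disc M).
have hne : 1 - disc M != 0 by rewrite subr_eq0 eq_sym lt_eqF.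
have hD : (Cb + D) * disc M = D.
  have e1 : D * (1 - disc M) = Cb * disc M by rewrite /D divfK.
  by rewrite mulrDl -e1 mulrBr mulr1 subrK.
apply: le_trans (ler_norm_sum _ _ _) _.
apply: le_trans (_ : \sum_a sg w h a * ((Cb + D) * disc M * disc M ^+ size h) <= _); last first.
  by rewrite -mulr_suml sg1 mul1r hD.
apply: ler_sum => a _; rewrite normrM ger0_norm // ler_wpM2l //.
rewrite -mulrA -exprS mulrDl [Cb * _]mulrC.
apply: le_trans (ler_normD _ _) _; apply: lerD.
  case: ifP => _; first exact: stage_bound (ltW b0).
  by rewrite normr0; apply: mulr_ge0; [rewrite exprn_ge0 // ltW|exact: Cb_ge0].
by have := IH (rcons h a); rewrite size_rcons.
Qed.

Lemma lim_bound (u : nat -> R) (D : R) : 0 <= D -> (forall T, `|u T| <= D) ->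
  `|limn u| <= D.
Proof.
move=> D0 hu; have [cu|ncu] := pselect (cvg (u @ \oo)%classic).
  rewrite ler_norml; apply/andP; split.
    apply: limr_ge => //; apply: nearW => T.
    by have := hu T; rewrite ler_norml => /andP[].
  apply: limr_le => //; apply: nearW => T.
  by have := hu T; rewrite ler_norml => /andP[].
by rewrite (dvgP ncu) normr0.
Qed.

Lemma V_bound (i : 'I_(ntraders M)) (w : state M) (h : hist M) (sg : profile M) (B : beliefs M) : is_profile sg -> is_beliefs B ->
  0 < disc M < 1 ->
  `|V i w h sg B| <= Cb * disc M / (1 - disc M).
Proof.
move=> hsg hB /andP[b0 b1].
have hb : 0 < disc M < 1 by rewrite b0 b1.
set D := Cb * disc M / (1 - disc M).
have D0 : 0 <= D.
  apply: divr_ge0; last by rewrite subr_ge0 ltW.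
  by apply: mulr_ge0; [exact: Cb_ge0|exact: ltW].
have [B0 [_ [B1 _]]] := hB w h.
have hc : forall w' (t : hist M), `|cont i sg w' t| <= D.
  move=> w' t; apply: lim_bound => // T.
  apply: le_trans (vT_bound i sg w' hsg hb T t) _.
  rewrite ler_piMr // exprn_ile1 ?ltW //.
apply: le_trans (ler_norm_sum _ _ _) _.
apply: le_trans (_ : \sum_w' \sum_(t : (size h).-tuple (action M)) B w h w' t * D <= _).
  apply: ler_sum => w' _; apply: le_trans (ler_norm_sum _ _ _) _.
  apply: ler_sum => t _; rewrite normrM ger0_norm // ler_wpM2l //.
under eq_bigr do rewrite -mulr_suml.
by rewrite -mulr_suml B1 mul1r.
Qed.

End Aux.

Theorem lemma1 (R : realType) (M : market R) (m : nat) (eps : R)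
    (sg : profile M) (B : beliefs M) :
  market_axioms M -> (1 <= m)%N -> 0 <= eps ->
  in_A m sg B -> eps_PBE (Gamma m) eps sg B ->
  eps_PBE (@Gamma_inf R M) (eps + wm M m) sg B.
Proof.
move=> hM hm heps _ [[hsg hnull] [hB [hcons hpbe]]].
have [n0 [_ [_ [_ [_ [_ [hb _]]]]]]] := hM.
split; first exact: hsg.
split; first exact: hB.
split; first exact: hcons.
move=> i w h hmov tau htau.
set tau' : profile M := fun w h a =>
  if (size h < m)%N then tau w h a else (a == null_act w h)%:R.
have mixP : forall t, is_profile t -> is_profile (mix i t sg).
  move=> t [t0 [t1 t2]]; have [s0 [s1 s2]] := hsg.
  split; first by move=> w1 h1 a; rewrite /mix; case: ifP.
  split; first by move=> w1 h1; rewrite /mix; case: ifP.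
  move=> w1 h1 w2 h2 hs a; have := hs => /andP[/eqP hsz _].
  by rewrite /mix /mover_is hsz; case: ifP => _; [apply: t2|apply: s2].
have htau' : Gamma m tau'.
  have [t0 [t1 t2]] := htau.
  split; last by move=> w1 h1 hle; rewrite /tau' ltnNge hle /= eqxx.
  split; first by move=> w1 h1 a; rewrite /tau'; case: ifP.
  split.
    move=> w1 h1; rewrite /tau'; case: (ltnP (size h1) m) => hlt.
      exact: t1.
    by rewrite (bigD1 (null_act w1 h1)) //= eqxx big1 ?addr0 // => a /negbTE ->.
  move=> w1 h1 w2 h2 hs a; have := hs => /andP[/eqP hsz /forallP hv].
  rewrite /tau' -hsz; case: ifP => _; first exact: t2.
  have hlt : (size h1 %% ntraders M < ntraders M)%N by rewrite ltn_pmod.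
  have := hv (Ordinal hlt); rewrite /mover_is eqxx /= => /eqP [_ hann _].
  by rewrite /null_act /last_ann hann.
have hle1 := hpbe i w h hmov tau' htau'.
have hd : `|V i w h (mix i tau sg) B - V i w h (mix i tau' sg) B| <= wm M m.
  rewrite /wm; apply: ub_le_sup; last first.
    exists i, w, h, (mix i tau sg), (mix i tau' sg), B; split => //.
    - exact: mixP.
    - by apply: mixP; case: htau'.
    - move=> w1 h1 hs a; rewrite /mix /tau'; case: ifP => // _.
      by rewrite ifT //; move: hs; case: (m) => // m' /=; apply: leq_trans.
  exists ((@Cb R M * disc M / (1 - disc M)) *+ 2) => d [i1 [w1 [h1 [s1 [s2 [B1 [p1 p2 _ pB ->]]]]]]].
  apply: le_trans (ler_normB _ _) _; rewrite mulr2n.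
  by apply: lerD; apply: V_bound.
have := ler_norm (V i w h (mix i tau sg) B - V i w h (mix i tau' sg) B).
move: hd hle1; set a := V _ _ _ (mix i tau sg) B; set b := V _ _ _ (mix i tau' sg) B.
move=> h1 h2 h3; rewrite addrA.
have := le_trans h3 h1; rewrite lerBlDr => h4.
apply: le_trans h4 _; rewrite addrC lerD2l //.
Qed.
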